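(* Let $n\geq 3$ be odd. Then \[ \mu^-(A_{n+1}) \leq \mu^-(A_n) \quad\text{and}\quad \mu^+(A_{n+1}) \leq \mu^+(A_n). \]
   Context: All graphs are simple; eigenvalues of a graph are those of its $(0,1)$-adjacency matrix. For a graph $G$, $\mu^-(G)$ denotes the largest eigenvalue of $G$ that is less than $-1$, and $\mu^+(G)$ denotes the smallest positive eigenvalue of $G$. Threshold graphs from binary strings: given $b=b_1b_2\cdots b_n\in\{0,1\}^n$ with $b_1=0$, let $G_1$ be a single vertex $v_1$, and for $j=2,\ldots,n$ obtain $G_j$ from $G_{j-1}$ by adding a new vertex $v_j$ which is adjacent to all previous vertices if $b_j=1$ and isolated if $b_j=0$; $G(b)=G_n$. The anti-regular graph $A_n$ is the threshold graph $G(b)$ with $b=0101\cdots01$ (length $n$) when $n$ is even and $b=00101\cdots01$ (length $n$) when $n$ is odd. *)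

(* Defs.v *)
From HB Require Import structures.
From mathcomp Require Import all_boot all_order all_algebra.
Set Implicit Arguments. Unset Strict Implicit. Unset Printing Implicit Defensive.
Import Order.TTheory GRing.Theory Num.Theory.
Local Open Scope ring_scope.

(* Threshold graph G(b) for a binary string b = b_1 ... b_n (stored 0-indexed:
   b_{k+1} = nth false b k). Vertex v_{k+1} is the ordinal k : 'I_n.
   For i < j, v_i ~ v_j iff b_j = 1 (v_j was added as a dominating vertex). *)
Definition threshold_adj (R : nzRingType) (b : seq bool) : 'M[R]_(size b) :=
  \matrix_(i, j) ((i != j) && nth false b (maxn i j))%:R.

(* bit string of the anti-regular graph A_n:
   n even : 0101...01 ;  n odd : 00101...01  (0-indexed position k) *)
Definition antiregular_bits (n : nat) : seq bool :=
  mkseq (fun k => if odd n then (k != 0%N) && ~~ odd k else odd k) n.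

Definition antiregular_adj (R : nzRingType) (n : nat) :=
  threshold_adj R (antiregular_bits n).

Definition is_mu_minus (R : realFieldType) (m : nat) (A : 'M[R]_m) (x : R) : Prop :=
  [/\ eigenvalue A x, x < -1 &
      forall y, eigenvalue A y -> y < -1 -> y <= x].

Definition is_mu_plus (R : realFieldType) (m : nat) (A : 'M[R]_m) (x : R) : Prop :=
  [/\ eigenvalue A x, 0 < x &
      forall y, eigenvalue A y -> 0 < y -> x <= y].

(* Main.v *)
Require Import Defs.
From HB Require Import structures.
From mathcomp Require Import all_boot all_order all_algebra.
From mathcomp Require Import polyrcf.
From mathcomp Require Import ring lra zify.
Import Order.TTheory GRing.Theory Num.Theory.
Local Open Scope ring_scope.
Set Implicit Arguments. Unset Strict Implicit. Unset Printing Implicit Defensive.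


Section Tri.
Variable R : comNzRingType.

Definition tri (n : nat) (d e : nat -> R) : 'M[R]_n :=
  \matrix_(i, j) (if (i : nat) == j then d i else if (j : nat) == i.+1 then e i
                  else if (i : nat) == j.+1 then e j else 0).

Lemma det_tri n (d e : nat -> R) :
  \det (tri n.+2 d e) = d 0%N * \det (tri n.+1 (fun i => d i.+1) (fun i => e i.+1))
     - e 0%N ^+ 2 * \det (tri n (fun i => d i.+2) (fun i => e i.+2)).
Proof.
rewrite (expand_det_row _ ord0) big_ord_recl big_ord_recl big1; last first.
  by move=> i _; rewrite !mxE /= mul0r.
rewrite addr0 !mxE /= /cofactor /= expr0 mul1r expr1.
have -> : row' ord0 (col' ord0 (tri n.+2 d e)) = tri n.+1 (fun i => d i.+1) (fun i => e i.+1).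
  by apply/matrixP => i j; rewrite !mxE /=.
set B := row' ord0 (col' (lift ord0 ord0) (tri n.+2 d e)).
rewrite (expand_det_col B ord0) big_ord_recl big1; last first.
  by move=> i _; rewrite !mxE /= mul0r.
rewrite addr0 !mxE /= /cofactor /= expr0 mul1r.
have -> : row' ord0 (col' ord0 B) = tri n (fun i => d i.+2) (fun i => e i.+2).
  by apply/matrixP => i j; rewrite !mxE /=.
ring.
Qed.

Lemma sum_delta n (f : nat -> R) (t : nat) :
  \sum_(l < n) ((l : nat) == t)%:R * f l = if (t < n)%N then f t else 0.
Proof.
case: ifP => h.
  rewrite (bigD1 (Ordinal h)) //= eqxx mul1r big1 ?addr0 // => l hl.
  have -> : ((l : nat) == t) = false.
    by apply/negbTE; apply: contra hl => /eqP hl; apply/eqP/val_inj.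
  by rewrite mul0r.
rewrite big1 // => l _.
have -> : ((l : nat) == t) = false by apply/eqP => hl; move: (ltn_ord l); rewrite hl h.
by rewrite mul0r.
Qed.

Definition Lmx n : 'M[R]_n := \matrix_(i, j) (((i : nat) == j)%:R - ((j : nat) == i.+1)%:R).

Lemma sumL n (f : nat -> R) (i : nat) : (i < n)%N ->
  \sum_(k < n) (((i == k :> nat))%:R - ((k : nat) == i.+1)%:R) * f k
    = f i - (if (i.+1 < n)%N then f i.+1 else 0).
Proof.
move=> hi.
rewrite (eq_bigr (fun k : 'I_n => ((k : nat) == i)%:R * f k - ((k : nat) == i.+1)%:R * f k)).
  by rewrite sumrB !sum_delta hi.
by move=> k _; rewrite mulrBl eq_sym.
Qed.

Lemma det_Lmx n : \det (Lmx n) = 1.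
Proof.
rewrite -det_tr det_trig.
  by rewrite big1 // => i _; rewrite !mxE eqxx ltn_eqF // subr0.
apply/is_trig_mxP => i j hij; rewrite !mxE.
have -> : (j == i :> nat) = false by lia.
have -> : (i == j.+1 :> nat) = false by lia.
by rewrite subrr.
Qed.

Definition Dm n (m : nat -> nat -> R) i j :=
  m i j - (if (i.+1 < n)%N then m i.+1 j else 0) - (if (j.+1 < n)%N then m i j.+1 else 0)
  + (if (i.+1 < n)%N && (j.+1 < n)%N then m i.+1 j.+1 else 0).

Lemma LmxE n (m : nat -> nat -> R) (i j : 'I_n) :
  (Lmx n *m \matrix_(k, l) m k l *m (Lmx n)^T) i j = Dm n m i j.
Proof.
rewrite !mxE.
rewrite (eq_bigr (fun k : 'I_n => (((j : nat) == k)%:R - ((k : nat) == j.+1)%:R) *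
      (m i k - (if (i.+1 < n)%N then m i.+1 k else 0)))); last first.
  move=> k _; rewrite !mxE mulrC; congr (_ * _).
  rewrite (eq_bigr (fun l : 'I_n => (((i : nat) == l)%:R - ((l : nat) == i.+1)%:R) * m l k)).
    by rewrite (sumL (fun l => m l k)).
  by move=> l _; rewrite !mxE.
rewrite (sumL (fun k => m i k - (if (i.+1 < n)%N then m i.+1 k else 0))) //.
rewrite /Dm; case: ifP => _; case: ifP => _ //=; ring.
Qed.

Definition mth (b : seq bool) (a : R) (i j : nat) : R :=
  (if i == j then a else 0) - ((i != j) && nth false b (maxn i j))%:R.
Definition dl (b : seq bool) (a : R) (i : nat) : R :=
  if i.+1 == size b then a else 2%:R * (a + (nth false b i.+1)%:R).
Definition el (b : seq bool) (a : R) (i : nat) : R := - (a + (nth false b i.+1)%:R).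

Lemma thr_mx (b : seq bool) (a : R) :
  a%:M - threshold_adj R b = \matrix_(i, j) mth b a i j.
Proof.
apply/matrixP => i j; rewrite !mxE /mth.
case: (eqVneq (i : nat) j) => [/val_inj ->|h]; rewrite ?eqxx /=; first by rewrite subr0. 
have h1 : ((i : nat) == j) = false by apply/negbTE.
have h2 : (i == j) = false by apply/negbTE.
by rewrite h2 /= mulr0n.
Qed.

Ltac decide_nat :=
  repeat match goal with
  | |- context [(?x == ?y :> nat)] =>
      first [ have -> : (x == y) = true by lia | have -> : (x == y) = false by lia ]
  | |- context [maxn ?x ?y] =>
      first [ have -> : maxn x y = x by lia | have -> : maxn x y = y by lia ]
  | |- context [(?x <= ?y)%N] =>
      first [ have -> : (x <= y)%N = true by lia | have -> : (x <= y)%N = false by lia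
            | case: (leqP x y) => ? ]
  end.

Lemma D_tri (b : seq bool) (a : R) (i j : nat) : (i < size b)%N -> (j < size b)%N ->
  Dm (size b) (mth b a) i j =
  (if i == j then dl b a i else if j == i.+1 then el b a i
                  else if i == j.+1 then el b a j else 0).
Proof.
move=> hi hj; rewrite /Dm /mth /dl /el.
move: hi hj; set n := size b => hi hj.
case: (ltngtP i j) => hij; [case: (eqVneq j i.+1) => [->|nej] |
  case: (eqVneq i j.+1) => [->|nei] | rewrite hij].
all: decide_nat; rewrite /=; ring.
Qed.

Lemma det_thr (b : seq bool) (a : R) :
  \det (a%:M - threshold_adj R b) = \det (tri (size b) (dl b a) (el b a)).
Proof.
have -> : tri (size b) (dl b a) (el b a) =
    Lmx (size b) *m (a%:M - threshold_adj R b) *m (Lmx (size b))^T.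
  apply/matrixP => i j; rewrite thr_mx LmxE D_tri //  !mxE //.
by rewrite !det_mulmx det_tr det_Lmx mul1r mulr1.
Qed.

Lemma eq_tri n d d' e e' : (forall i, (i < n)%N -> d i = d' i) ->
  (forall i, (i.+1 < n)%N -> e i = e' i) -> tri n d e = tri n d' e'.
Proof.
move=> hd he; apply/matrixP => i j; rewrite !mxE.
case: eqP => [_|_]; first by rewrite hd.
case: eqP => [hj|_]; first by rewrite he // -hj.
case: eqP => [hi|_] //; by rewrite he // -hi.
Qed.
End Tri.

Section Anti.
Variable R : comNzRingType.
Local Notation arb := antiregular_bits.

Definition dlN N (a : R) i := if i.+1 == N then a else 2%:R * (a + (nth false (arb N) i.+1)%:R).
Definition elN N (a : R) i := - (a + (nth false (arb N) i.+1)%:R).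

Lemma arb_shift M k : (0 < k)%N -> (k < M)%N ->
  nth false (arb M.+1) k.+1 = nth false (arb M) k.
Proof.
move=> k0 kM; rewrite /arb !nth_mkseq //=.
by case: (odd M) => /=; rewrite ?negbK // -lt0n k0.
Qed.

Lemma arb1 N : nth false (arb N.+2) 1 = ~~ odd N.
Proof. by rewrite /arb nth_mkseq //=; case: (odd N). Qed.

Lemma detN_tri N (a : R) :
  \det (a%:M - antiregular_adj R N) = \det (tri N (dlN N a) (elN N a)).
Proof.
rewrite /antiregular_adj det_thr /dl /el.
have e : size (arb N) = N := size_mkseq _ _.
by rewrite e.
Qed.

Lemma detN_rec N (a : R) :
  \det (tri N.+2 (dlN N.+2 a) (elN N.+2 a)) =
   2%:R * (a + (~~ odd N)%:R) * \det (tri N.+1 (dlN N.+1 a) (elN N.+1 a))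
   - (a + (~~ odd N)%:R) ^+ 2 * \det (tri N (dlN N a) (elN N a)).
Proof.
rewrite det_tri.
have -> : tri N.+1 (fun i => dlN N.+2 a i.+1) (fun i => elN N.+2 a i.+1) =
          tri N.+1 (dlN N.+1 a) (elN N.+1 a).
  apply: eq_tri => i hi; rewrite /dlN /elN.
    have [->|h] := eqVneq i N; first by rewrite !eqxx.
    by rewrite !eqSS (negbTE h) arb_shift //; lia.
  by rewrite arb_shift //; lia.
have -> : tri N (fun i => dlN N.+2 a i.+2) (fun i => elN N.+2 a i.+2) =
          tri N (dlN N a) (elN N a).
  apply: eq_tri => i hi; rewrite /dlN /elN.
    have [->|h] := eqVneq i.+1 N; first by rewrite !eqxx.
    by rewrite !eqSS (negbTE h) !arb_shift //; lia.
  by rewrite !arb_shift //; lia.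
rewrite [dlN N.+2 a 0]/dlN [elN N.+2 a 0]/elN arb1 /= sqrrN; ring.
Qed.
End Anti.

Section Poly.
Variable R : rcfType.
Local Notation arb := antiregular_bits.

Fixpoint FG (m : nat) : {poly R} * {poly R} :=
  if m is m'.+1 then
    let fg := FG m' in
    let g' := 2%:R * 'X * ('X + 1) * fg.1 - ('X + 1) ^+ 2 * fg.2 in
    (2%:R * g' - 'X ^+ 2 * fg.1, g')
  else (1, 1).

Definition Fp m := (FG m).1.
Definition Gp m := (FG m).2.
Definition Hp m := 2%:R * 'X * Fp m - ('X + 1) * Gp m.

Definition f m (a : R) := (Fp m).[a].
Definition g m (a : R) := (Gp m).[a].
Definition h m (a : R) := (Hp m).[a].

Lemma gS m a : g m.+1 a = 2%:R * a * (a + 1) * f m a - (a + 1) ^+ 2 * g m a.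
Proof. by rewrite /g /f /Gp /Fp /= !hornerE. Qed.

Lemma fS m a : f m.+1 a = 2%:R * g m.+1 a - a ^+ 2 * f m a.
Proof. by rewrite /g /f /Gp /Fp /= !hornerE. Qed.

Lemma hE m a : h m a = 2%:R * a * f m a - (a + 1) * g m a.
Proof. by rewrite /h /g /f /Hp !hornerE. Qed.

Lemma f0 a : f 0 a = 1.
Proof. by rewrite /f /Fp /= hornerE. Qed.
Lemma g0 a : g 0 a = 1.
Proof. by rewrite /g /Gp /= hornerE. Qed.

Lemma gh m a : g m.+1 a = (a + 1) * h m a.
Proof. rewrite gS hE; ring. Qed.

Lemma E1 m a : f m.+2 a = (2%:R * (a * (a + 1)) - 1) * f m.+1 a - (a * (a + 1)) ^+ 2 * f m a.
Proof.
rewrite fS gS (fS m) gS; ring.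
Qed.

Lemma E5 m a : h m.+1 a = 2%:R * a * f m.+1 a - (a + 1) ^+ 2 * h m a.
Proof. rewrite !hE fS gS; ring. Qed.

Lemma E6 m a : f m.+1 a = 2%:R * (a + 1) * h m a - a ^+ 2 * f m a.
Proof. rewrite fS gS hE; ring. Qed.

Definition detT N (a : R) := \det (tri N (dlN N a) (elN N a)).

Lemma detT_fg m a : detT m.*2 a = g m a /\ detT m.*2.+1 a = a * f m a.
Proof.
elim: m => [|m [IH1 IH2]].
  split; first by rewrite /detT det_mx00 g0.
  by rewrite /detT det_mx11 !mxE /= /dlN /= f0 mulr1.
have e1 : detT m.*2.+2 a = g m.+1 a.
  rewrite /detT detN_rec -/(detT _ _) -/(detT _ _) IH1 IH2 odd_double /= gS; ring.
split; first by rewrite doubleS.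
rewrite doubleS /detT detN_rec -/(detT _ _) -/(detT _ _) e1 IH2 /= odd_double /= fS; ring.
Qed.

Lemma eigen_det n (A : 'M[R]_n) a : eigenvalue A a = (\det (a%:M - A) == 0).
Proof.
apply/eigenvalueP/det0P=> [[v Av_av v_nz] | [v v_nz Av_av]]; exists v => //.
  by rewrite mulmxBr Av_av mul_mx_scalar subrr.
by apply/eqP; rewrite -mul_mx_scalar eq_sym -subr_eq0 -mulmxBr Av_av.
Qed.

Lemma eigen_even m a : eigenvalue (antiregular_adj R m.*2) a = (g m a == 0).
Proof. by rewrite eigen_det detN_tri -/(detT _ _) (detT_fg m a).1. Qed.

Lemma eigen_odd m a : eigenvalue (antiregular_adj R m.*2.+1) a = (a * f m a == 0).
Proof. by rewrite eigen_det detN_tri -/(detT _ _) (detT_fg m a).2. Qed.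
End Poly.


Section Helpers.
Variable R : rcfType.
Implicit Types (p : {poly R}) (u v x y z s t : R).

Lemma ivt_s p u v s : s * s = 1 -> u <= v -> 0 <= s * p.[u] -> s * p.[v] <= 0 ->
  exists2 x, u <= x <= v & root p x.
Proof.
move=> ss uv hu hv.
have hp : p.[u] * p.[v] <= 0.
  have -> : p.[u] * p.[v] = - ((s * p.[u]) * (- (s * p.[v]))).
    by rewrite mulrN opprK mulrACA ss mul1r.
  by rewrite oppr_le0 mulr_ge0 // oppr_ge0.
have [c hc rc] := polyrcf.poly_ivt uv hp.
by exists c => //; move: hc; rewrite in_itv.
Qed.

Lemma keep_sign p u v t s : s * s = 1 -> u <= t -> t <= v -> 0 < s * p.[t] ->
  (forall x, u < x -> x < v -> ~~ root p x) ->
  forall x, u <= x -> x <= v -> 0 <= s * p.[x].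
Proof.
move=> ss ut tv ht hfree x ux xv; rewrite leNgt; apply/negP => hx.
have pt0 : p.[t] != 0 by apply: contraTneq ht => ->; rewrite mulr0 ltxx.
have px0 : p.[x] != 0 by apply: contraTneq hx => ->; rewrite mulr0 ltxx.
have [xt|tx] := leP x t.
- have [c /andP[xc ct] rc] : exists2 c, x <= c <= t & root p c.
    apply: (@ivt_s p x t (- s)) => //; rewrite ?mulrNN ?ss ?mulNr ?oppr_ge0 ?oppr_le0 ?ltW //.
  have cx : c != x by apply: contraNneq px0 => <-; apply/eqP/rootP.
  have ctt : c != t by apply: contraNneq pt0 => <-; apply/eqP/rootP.
  have h1 : u < c by apply: le_lt_trans ux _; rewrite lt_neqAle eq_sym cx xc.
  have h2 : c < v by apply: lt_le_trans tv; rewrite lt_neqAle ctt ct.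
  by move: (hfree c h1 h2); rewrite rc.
- have [c /andP[tc cx] rc] : exists2 c, t <= c <= x & root p c.
    by apply: (@ivt_s p t x s); rewrite ?ltW // ltW.
  have cx' : c != x by apply: contraNneq px0 => <-; apply/eqP/rootP.
  have ctt : c != t by apply: contraNneq pt0 => <-; apply/eqP/rootP.
  have h1 : u < c by apply: le_lt_trans ut _; rewrite lt_neqAle eq_sym ctt tc.
  have h2 : c < v by apply: lt_le_trans xv; rewrite lt_neqAle cx' cx.
  by move: (hfree c h1 h2); rewrite rc.
Qed.

Lemma keep_sign_strict p u v t s : s * s = 1 -> u <= t -> t <= v -> 0 < s * p.[t] ->
  (forall x, u < x -> x < v -> ~~ root p x) ->
  forall x, u < x -> x < v -> 0 < s * p.[x].
Proof.
move=> ss ut tv ht hfree x ux xv.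
have := keep_sign ss ut tv ht hfree (ltW ux) (ltW xv).
rewrite le_eqVlt => /orP[/eqP h|//].
have : s * (s * p.[x]) = 0 by rewrite -h mulr0.
by rewrite mulrA ss mul1r => /eqP; move: (hfree x ux xv); rewrite rootE => /negbTE ->.
Qed.

Lemma last_root p z b : z < b -> root p z -> ~~ root p b ->
  exists y, [/\ z <= y, y < b, root p y & forall x, y < x -> x < b -> ~~ root p x].
Proof.
move=> zb rz nrb.
case: (prev_rootP p (z - 1) b) => [p0|y np0 py0 hy hfree|c np0 hc hfree].
- by move: nrb; rewrite p0 root0.
- have yb : y < b by move: hy; rewrite in_itv => /andP[].
  exists y; split => //; last first.
  + by move=> x yx xb; apply: hfree; rewrite in_itv /= yx xb.
  + by apply/rootP.
  rewrite leNgt; apply/negP => zy.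
  by move: (hfree z); rewrite in_itv /= zy zb rz => /(_ isT).
- by move: (hfree z); rewrite in_itv /= zb rz andbT ltrBlDr ltrDl ltr01 => /(_ isT).
Qed.

Lemma first_root p a z : a < z -> root p z -> ~~ root p a ->
  exists w, [/\ a < w, w <= z, root p w & forall x, a < x -> x < w -> ~~ root p x].
Proof.
move=> az rz nra.
case: (next_rootP p a (z + 1)) => [p0|y np0 py0 hy hfree|c np0 hc hfree].
- by move: nra; rewrite p0 root0.
- have ay : a < y by move: hy; rewrite in_itv => /andP[].
  exists y; split => //; last first.
  + by move=> x ax xy; apply: hfree; rewrite in_itv /= ax xy.
  + by apply/rootP.
  rewrite leNgt; apply/negP => zy.
  by move: (hfree z); rewrite in_itv /= az zy rz => /(_ isT).
- by move: (hfree z); rewrite in_itv /= az rz ltrDl ltr01 => /(_ isT).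
Qed.

Definition sg k : R := (-1) ^+ k.
Lemma sgS k : sg k.+1 = - sg k.
Proof. by rewrite /sg exprS mulN1r. Qed.
Lemma sgSS k : sg k.+2 = sg k.
Proof. by rewrite !sgS opprK. Qed.
Lemma sg2 k : sg k * sg k = 1.
Proof. by rewrite /sg -exprD addnn -mul2n exprM sqrrN expr1n expr1n. Qed.
End Helpers.
Arguments sg {R} k.
Arguments sg2 {R} k.
Arguments sgS {R} k.
Arguments sgSS {R} k.


Section Analysis.
Variable R : rcfType.
Local Notation f := (@f R).
Local Notation g := (@g R).
Local Notation h := (@h R).

Lemma g_at0 k : g k 0 = sg k.
Proof.
elim: k => [|k IH]; first by rewrite g0.
by rewrite gS IH sgS; ring.
Qed.

Lemma f_at0 k : f k.+1 0 = 2%:R * sg k.+1.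
Proof. by rewrite fS g_at0; ring. Qed.

Lemma f_atm1 k : f k (-1) = sg k.
Proof.
elim: k => [|k IH]; first by rewrite f0.
by rewrite fS gS IH sgS; ring.
Qed.

Lemma h_atm1 k : h k (-1) = 2%:R * sg k.+1.
Proof. by rewrite hE f_atm1 sgS; ring. Qed.

Lemma rootF k x : root (Fp R k) x = (f k x == 0).
Proof. by rewrite rootE. Qed.
Lemma rootH k x : root (Hp R k) x = (h k x == 0).
Proof. by rewrite rootE. Qed.
Lemma rootG k x : root (Gp R k) x = (g k x == 0).
Proof. by rewrite rootE. Qed.

Lemma f1E x : f 1 x = x ^+ 2 - 2%:R.
Proof. rewrite fS gS f0 g0; ring. Qed.

Lemma F1E x : (Fp R 1).[x] = x ^+ 2 - 2%:R.
Proof. exact: f1E. Qed.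

Lemma PosInv k : exists w, [/\ 0 < w, f k.+1 w = 0,
   (forall x, 0 < x -> x < w -> f k.+1 x != 0) &
   (forall x, 0 < x -> x <= w -> 0 <= sg k * f k x)].
Proof.
elim: k => [|k [w [w0 fw hfree hsg]]].
  have [z /andP[z0 z2] rz] : exists2 z, 0 <= z <= 2%:R & root (Fp R 1) z.
    apply: (@ivt_s _ _ _ _ (-1)); rewrite ?mulN1r ?opprK ?mulrNN ?mulr1 // ?F1E; lra.
  have nr0 : ~~ root (Fp R 1) 0 by rewrite rootF f1E; apply/eqP; lra.
  have z0' : 0 < z by rewrite lt_neqAle z0 andbT; apply: contraNneq nr0 => ->.
  have [w [w0 wz rw hfree]] := first_root z0' rz nr0.
  exists w; split => //; first exact/rootP.
  by move=> x _ _; rewrite f0 /sg expr0 mulr1 ler01.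
have e1 : sg k * f k.+2 w <= 0.
  have := hsg w w0 (lexx w); rewrite E1 fw mulr0 sub0r mulrN mulrCA oppr_le0 => H.
  by apply: mulr_ge0 => //; apply: sqr_ge0.
have e0 : 0 <= sg k * f k.+2 0.
  by rewrite f_at0 sgSS mulrCA sg2 mulr1 ler0n.
have [z /andP[z0 zw] rz] := @ivt_s R (Fp R k.+2) 0 w (sg k) (sg2 k) (ltW w0) e0 e1.
have nr0 : ~~ root (Fp R k.+2) 0.
  by rewrite rootE -/(f _ _) f_at0 mulf_neq0 ?pnatr_eq0 // /sg signr_eq0.
have z0' : 0 < z by rewrite lt_neqAle z0 andbT; apply: contraNneq nr0 => ->.
have [w1 [w10 w1z rw1 hfree1]] := first_root z0' rz nr0.
exists w1; split => //; first exact/rootP.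
move=> x x0 xw1.
have hfr : forall x, 0 < x -> x < w -> ~~ root (Fp R k.+1) x.
  by move=> y y0 yw; rewrite rootE; apply: hfree.
apply: (keep_sign (sg2 k.+1) (lexx 0) (ltW w0) _ hfr) => //.
- by rewrite -/(f _ _) f_at0 mulrCA sg2 mulr1 ltr0n.
- exact: ltW.
- exact: le_trans xw1 (le_trans w1z zw).
Qed.

Lemma F1E' x : f 1 x = x ^+ 2 - 2%:R.
Proof. exact: f1E. Qed.

Lemma NegInv k : exists y, [/\ y < -1, f k.+1 y = 0,
  (forall x, y < x -> x < -1 -> f k.+1 x != 0),
  (forall x, y <= x -> x <= -1 -> 0 <= sg k * f k x) &
  ((forall x, y < x -> x < -1 -> 0 < sg k * h k.+1 x) /\
  (exists2 z, z < -1 & sg k * h k.+1 z <= 0))].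
Proof.
elim: k => [|k [y [y1 fy hfree hsgf [hsgh _]]]].
  have [z /andP[z0 z1] rz] : exists2 z, -2%:R <= z <= -1 & root (Fp R 1) z.
    by apply: (@ivt_s _ _ _ _ 1); rewrite ?mul1r ?F1E //; lra.
  have nr1 : ~~ root (Fp R 1) (-1) by rewrite rootE F1E; apply/eqP; lra.
  have z1' : z < -1 by rewrite lt_neqAle z1 andbT; apply: contraNneq nr1 => <-.
  have [y [zy y1 ry hfree]] := last_root z1' rz nr1.
  exists y; split => //; first exact/rootP; last split.
  - by move=> x _ _; rewrite f0 /sg expr0 mulr1 ler01.
  - move=> x yx x1.
    have hf : 0 < sg 1 * f 1 x.
      apply: (keep_sign_strict (sg2 1) (ltW y1) (lexx _) _ hfree yx x1).
      by rewrite -/(f _ _) F1E' /sg expr1; lra.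
    move: hf; rewrite E5 hE f0 g0 /sg expr1 expr0 mul1r => hf.
    have hA : 0 < (- (2%:R * x)) * (-1 * f 1 x) by apply: mulr_gt0 => //; lra.
    have hB : 0 <= (x + 1) ^+ 2 * (1 - x) by apply: mulr_ge0; [apply: sqr_ge0 | lra].
    have -> : 2%:R * x * f 1 x - (x + 1) ^+ 2 * (2%:R * x * 1 - (x + 1) * 1) =
      (- (2%:R * x)) * (-1 * f 1 x) + (x + 1) ^+ 2 * (1 - x) by ring.
    lra.
  - exists (-2%:R); first lra.
    rewrite E5 hE f0 g0 F1E' /sg expr0 mul1r; lra.
have ssN : (- (sg k : R)) * (- sg k) = 1 by rewrite mulrNN sg2.
have e1 : 0 <= - sg k * f k.+2 y.
  have := hsgf y (lexx y) (ltW y1).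
  rewrite E1 fy mulr0 sub0r mulrN mulNr opprK mulrCA => H.
  by apply: mulr_ge0 => //; apply: sqr_ge0.
have e0 : - sg k * f k.+2 (-1) <= 0.
  by rewrite f_atm1 sgSS mulNr sg2 lerN10.
have [z /andP[yz z1] rz] := @ivt_s R (Fp R k.+2) y (-1) (- sg k) ssN (ltW y1) e1 e0.
have nr1 : ~~ root (Fp R k.+2) (-1).
  by rewrite rootE -/(f _ _) f_atm1 /sg signr_eq0.
have z1' : z < -1 by rewrite lt_neqAle z1 andbT; apply: contraNneq nr1 => <-.
have [y' [zy' y'1 ry' hfree']] := last_root z1' rz nr1.
have yy' : y <= y' := le_trans yz zy'.
have hfr : forall x, y < x -> x < -1 -> ~~ root (Fp R k.+1) x.
  by move=> x yx x1; rewrite rootE; apply: hfree.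
exists y'; split => //; first exact/rootP; last split.
- move=> x yx x1; apply: (keep_sign (sg2 k.+1) (ltW y1) (lexx _) _ hfr) => //.
    by rewrite -/(f _ _) f_atm1 sg2 ltr01.
  exact: le_trans yy' yx.
- move=> x yx x1.
  have hA : 0 < sg k.+2 * f k.+2 x.
    apply: (keep_sign_strict (sg2 k.+2) (ltW y'1) (lexx _) _ hfree' yx x1).
    by rewrite -/(f _ _) f_atm1 sg2 ltr01.
  have hB : 0 < sg k * h k.+1 x by apply: hsgh => //; exact: le_lt_trans yy' yx.
  rewrite sgSS in hA.
  have -> : sg k.+1 * h k.+2 x =
      (- (2%:R * x)) * (sg k * f k.+2 x) + (x + 1) ^+ 2 * (sg k * h k.+1 x).
    by rewrite E5 sgS; ring.
  have hA' : 0 < (- (2%:R * x)) * (sg k * f k.+2 x) by apply: mulr_gt0 => //; lra.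
  have hB' : 0 <= (x + 1) ^+ 2 * (sg k * h k.+1 x).
    by apply: mulr_ge0; [apply: sqr_ge0 | exact: ltW].
  lra.
- exists y => //.
  have hfrH : forall x, y < x -> x < -1 -> ~~ root (Hp R k.+1) x.
    move=> x yx x1; rewrite rootE; have := hsgh x yx x1.
    by apply: contraTN => /eqP; rewrite -/(h _ _) => ->; rewrite mulr0 ltxx.
  have hy : 0 <= sg k * h k.+1 y.
    apply: (@keep_sign R (Hp R k.+1) y (-1) ((y - 1) / 2%:R) (sg k) (sg2 k) _ _ _ hfrH y (lexx y) (ltW y1)).
    + lra.
    + lra.
    + by apply: hsgh; lra.
  have hP : 0 < (- (y + 1)) * (- (3%:R * y - 1)) by apply: mulr_gt0; lra.
  have -> : sg k.+1 * h k.+2 y = - ((- (y + 1)) * (- (3%:R * y - 1))) * (sg k * h k.+1 y).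
    by rewrite E5 (E6 k.+1) fy sgS; ring.
  by rewrite mulNr oppr_le0; apply: mulr_ge0 => //; exact: ltW.
Qed.
End Analysis.

Theorem proposition2p1 (R : rcfType) (n : nat) :
  (3 <= n)%N -> odd n ->
  (exists x y : R,
      [/\ is_mu_minus (antiregular_adj R n.+1) x,
          is_mu_minus (antiregular_adj R n) y & x <= y]) /\
  (exists x y : R,
      [/\ is_mu_plus (antiregular_adj R n.+1) x,
          is_mu_plus (antiregular_adj R n) y & x <= y]).
Proof.
move=> n3 nodd.
have [k ->] : exists k, n = k.+1.*2.+1.
  have hn := odd_double_half n; rewrite nodd in hn.
  have h0 : (0 < n./2)%N.
    rewrite lt0n; apply/negP => /eqP h0; move: hn; rewrite h0 /= => hn; lia.
  exists (n./2).-1; rewrite prednK //; lia.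
have evN : forall a, eigenvalue (antiregular_adj R (k.+1.*2.+1).+1) a = (g k.+2 a == 0).
  by move=> a; exact: (eigen_even k.+2 a).
have evn : forall a, eigenvalue (antiregular_adj R k.+1.*2.+1) a = (a * f k.+1 a == 0).
  by move=> a; exact: (eigen_odd k.+1 a).
split.
- have [y [y1 fy hfree hsgf [hsgh [z z1 hz]]]] := NegInv R k.
  have ssN : (- (sg k : R)) * (- sg k) = 1 by rewrite mulrNN sg2.
  have e1 : 0 <= - sg k * h k.+1 z by rewrite mulNr oppr_ge0.
  have e0 : - sg k * h k.+1 (-1 : R) <= 0.
    by rewrite h_atm1 sgSS mulNr mulrCA sg2 mulr1 oppr_le0 ler0n.
  have [r /andP[zr r1] rr] := @ivt_s R (Hp R k.+1) z (-1) (- sg k) ssN (ltW z1) e1 e0.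
have nr1 : ~~ root (Hp R k.+1) (-1).
    by rewrite rootE -/(h _ _) h_atm1 mulf_neq0 ?pnatr_eq0 // /sg signr_eq0.
  have r1' : r < -1 by rewrite lt_neqAle r1 andbT; apply: contraNneq nr1 => <-.
  have [x0 [rx0 x01 rx0' hfx]] := last_root r1' rr nr1.
  have hx0 : h k.+1 x0 = 0 by apply/rootP.
  exists x0, y; split.
  + split.
    * by rewrite evN gh hx0 mulr0.
    * exact: x01.
    * move=> e; rewrite evN gh mulf_eq0 => /orP[/eqP he|he] e1'.
        by exfalso; lra.
      rewrite leNgt; apply/negP => x0e.
      by move: (hfx e x0e e1'); rewrite rootE he.
  + split.
    * by rewrite evn fy mulr0.
    * exact: y1.
    * move=> e; rewrite evn mulf_eq0 => /orP[/eqP he|he] e1'.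
        by exfalso; move: e1'; rewrite he; lra.
      rewrite leNgt; apply/negP => ye.
      by move: (hfree e ye e1'); rewrite he.
  + rewrite leNgt; apply/negP => yx0.
    by move: (hsgh x0 yx0 x01); rewrite hx0 mulr0 ltxx.
- have [w [w0 fw hfreew hsgw]] := PosInv R k.
  have hg1 : 0 <= sg k * g k.+1 w.
    have : 0 <= 2%:R * (sg k * g k.+1 w).
      have -> : 2%:R * (sg k * g k.+1 w) = w ^+ 2 * (sg k * f k w) + sg k * f k.+1 w.
        by rewrite fS; ring.
      rewrite fw mulr0 addr0; apply: mulr_ge0; first exact: sqr_ge0.
      exact: hsgw w w0 (lexx w).
    by rewrite pmulr_rge0 // ltr0n.
  have e1 : sg k * g k.+2 w <= 0.
    have -> : sg k * g k.+2 w = - ((w + 1) ^+ 2 * (sg k * g k.+1 w)) +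
        2%:R * w * (w + 1) * (sg k * f k.+1 w) by rewrite gS; ring.
    rewrite fw !mulr0 addr0 oppr_le0; apply: mulr_ge0 => //; exact: sqr_ge0.
  have e0 : 0 <= sg k * g k.+2 (0 : R) by rewrite g_at0 sgSS sg2 ler01.
  have [r /andP[r0 rw] rr] := @ivt_s R (Gp R k.+2) 0 w (sg k) (sg2 k) (ltW w0) e0 e1.
  have nr0 : ~~ root (Gp R k.+2) 0 by rewrite rootE -/(g _ _) g_at0 /sg signr_eq0.
  have r0' : 0 < r by rewrite lt_neqAle r0 andbT; apply: contraNneq nr0 => ->.
  have [t [t0 tr rt hft]] := first_root r0' rr nr0.
  exists t, w; split.
  + split.
    * by rewrite evN; apply/eqP/rootP.
    * exact: t0.
    * move=> e; rewrite evN => he e0'.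
      rewrite leNgt; apply/negP => et.
      by move: (hft e e0' et); rewrite rootE he.
  + split.
    * by rewrite evn fw mulr0.
    * exact: w0.
    * move=> e; rewrite evn mulf_eq0 => /orP[/eqP he|he] e0'.
        by exfalso; move: e0'; rewrite he ltxx.
      rewrite leNgt; apply/negP => ew.
      by move: (hfreew e e0' ew); rewrite he.
  + exact: le_trans tr rw.
Qed.
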